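(* Let $F$ be a commutative field, let $n\ge 1$ and $0\le k\le n-1$, and let $\chi:\Gamma(n,k,F)\to \mathrm{PG}(n,F)^*$ be a linear mapping satisfying the null property: $U\subseteq U^\chi$ for each $U\in\mathbb D(\chi)$. Then $\chi$ is a (generalised) polarity, i.e. for all $k$-subspaces $U_1,U_2$ that are collinear in $\Gamma(n,k,F)$, $U_1\subseteq U_2^\chi$ implies $U_2\subseteq U_1^\chi$, where for an exceptional $U\in\mathbb A(\chi)$ one sets $U^\chi$ to be the whole space $\mathrm{PG}(n,F)$.
   Context: $\mathrm{PG}(n,F)$ is the $n$-dimensional projective space over $F$; a $d$-subspace is a projective subspace of dimension $d$. For subspaces $U\subseteq W$, $[U,W]_d$ is the set of $d$-subspaces $X$ with $U\subseteq X\subseteq W$. The Grassmannian $\Gamma(n,k,F)$ is the semilinear space whose points (G-points) are the $k$-subspaces of $\mathrm{PG}(n,F)$ and whose lines (G-lines) are the pencils $[U,W]_k$ with $\dim U=k-1$, $\dim W=k+1$; two G-points are collinear if some G-line contains both (for $k=0$ this is $\mathrm{PG}(n,F)$ itself). $\mathrm{PG}(n,F)^*$ is the dual projective space (points are hyperplanes, lines are pencils of hyperplanes through an $(n-2)$-subspace). A partial map $\chi$ from a set $\mathcal P$ to $\mathcal P'$ is a map defined on a subset $\mathbb D(\chi)$ (domain); $\mathbb A(\chi)=\mathcal P\setminus\mathbb D(\chi)$ is the exceptional set; for a subset $\phi$, $\phi^\chi=\{X^\chi: X\in\phi\cap\mathbb D(\chi)\}$. A partial map between semilinear spaces is a linear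 mapping if for each line $\ell$ exactly one of the following holds: (i) $\ell^\chi$ is a line and $\chi$ maps $\ell$ bijectively onto $\ell^\chi$; (ii) $\ell^\chi$ is a single point and $|\ell\cap\mathbb A(\chi)|=1$; (iii) $\ell\subseteq\mathbb A(\chi)$. *)

(* Defs.v *)
(* PG(n,F) is modelled by the vector space F^(n+1) = 'rV[F]_(n.+1);
   a projective d-subspace is a vector subspace of (vector) dimension d+1. *)
From HB Require Import structures.
From mathcomp Require Import all_boot all_order all_algebra.
Set Implicit Arguments. Unset Strict Implicit. Unset Printing Implicit Defensive.
Import GRing.Theory.
Local Open Scope ring_scope.

Section PG.
Variables (F : fieldType) (n : nat).
Local Notation V := 'rV[F]_(n.+1).

Definition proj_sub (d : nat) (X : {vspace V}) : Prop := \dim X = d.+1.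

Definition gpoint (k : nat) (X : {vspace V}) : Prop := \dim X = k.+1.

(* The pencil [U,W]_k as a predicate; it is a G-line when U is a projective
   (k-1)-subspace (vector dim k) and W a projective (k+1)-subspace (vector dim k+2). *)
Definition pencil (k : nat) (U W X : {vspace V}) : Prop :=
  \dim X = k.+1 /\ (U <= X)%VS /\ (X <= W)%VS.

Definition is_gline_data (k : nat) (U W : {vspace V}) : Prop :=
  \dim U = k /\ \dim W = k.+2 /\ (U <= W)%VS.

Definition gcollinear (k : nat) (U1 U2 : {vspace V}) : Prop :=
  exists U W, is_gline_data k U W /\ pencil k U W U1 /\ pencil k U W U2.

(* points of the dual space PG(n,F)^*: hyperplanes (vector dim n) *)
Definition hyperplane (H : {vspace V}) : Prop := \dim H = n.

(* lines of PG(n,F)^*: hyperplanes through a projective (n-2)-subspace S *)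
Definition dual_line (S : {vspace V}) (H : {vspace V}) : Prop :=
  hyperplane H /\ (S <= H)%VS.

(* A partial map chi : Gamma(n,k,F) -> PG(n,F)^* is a function returning
   [None] on the exceptional set A(chi) and [Some H] on the domain D(chi). *)
Definition partial_map := {vspace V} -> option {vspace V}.

Definition image_set (chi : partial_map) (l : {vspace V} -> Prop) (H : {vspace V}) : Prop :=
  exists X, l X /\ chi X = Some H.

Definition exactly_one3 (P Q R : Prop) : Prop :=
  (P /\ ~ Q /\ ~ R) \/ (~ P /\ Q /\ ~ R) \/ (~ P /\ ~ Q /\ R).

Definition lin_case_i (chi : partial_map) (l : {vspace V} -> Prop) : Prop :=
  (exists S, \dim S = n.-1 /\ forall H, image_set chi l H <-> dual_line S H) /\
  (forall X, l X -> chi X <> None) /\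
  (forall X Y, l X -> l Y -> chi X = chi Y -> X = Y).

Definition lin_case_ii (chi : partial_map) (l : {vspace V} -> Prop) : Prop :=
  (exists H0, forall H, image_set chi l H <-> H = H0) /\
  (exists X0, l X0 /\ chi X0 = None /\ forall Y, l Y -> chi Y = None -> Y = X0).

Definition lin_case_iii (chi : partial_map) (l : {vspace V} -> Prop) : Prop :=
  forall X, l X -> chi X = None.

Definition partial_map_G_to_dual (k : nat) (chi : partial_map) : Prop :=
  forall X H, chi X = Some H -> gpoint k X /\ hyperplane H.

Definition linear_mapping (k : nat) (chi : partial_map) : Prop :=
  partial_map_G_to_dual k chi /\
  forall U W, is_gline_data k U W ->
    exactly_one3 (lin_case_i chi (pencil k U W)) (lin_case_ii chi (pencil k U W))
                 (lin_case_iii chi (pencil k U W)).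

Definition null_property (chi : partial_map) : Prop :=
  forall U H, chi U = Some H -> (U <= H)%VS.

Definition ext_image (chi : partial_map) (U : {vspace V}) : {vspace V} :=
  match chi U with Some H => H | None => fullv end.

Definition gen_polarity (k : nat) (chi : partial_map) : Prop :=
  forall U1 U2, gpoint k U1 -> gpoint k U2 -> gcollinear k U1 U2 ->
    (U1 <= ext_image chi U2)%VS -> (U2 <= ext_image chi U1)%VS.

End PG.

(* Main.v *)
Require Import Defs.
From mathcomp Require Import all_boot all_order all_algebra.
From mathcomp Require Import zify.
Import GRing.Theory.
Local Open Scope ring_scope.

Section Helpers.
Variables (F : fieldType) (n : nat).
Local Notation V := 'rV[F]_(n.+1).

Lemma hyp_cap (H H' S X : {vspace V}) :
  \dim H = n -> \dim H' = n -> H <> H' -> \dim S = n.-1 ->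
  (S <= H)%VS -> (S <= H')%VS -> (X <= H)%VS -> (X <= H')%VS -> (X <= S)%VS.
Proof.
move=> dH dH' nHH' dS SH SH' XH XH'.
have dF : (\dim (H + H')%VS <= n.+1)%N.
  by have := dimvS (subvf (H + H')%VS); rewrite dimvf /dim /= mul1n.
have dsum : \dim (H + H')%VS = n.+1.
  case: (boolP (H + H' <= H)%VS) => hs.
    exfalso; apply: nHH'; apply/eqP; rewrite eq_sym eqEdim dH dH' leqnn andbT.
    by apply: subv_trans hs; apply: addvSr.
  have := dimv_leqif_sup (addvSl H H') => /leqifP; rewrite (negbTE hs) dH => lt.
  by apply/eqP; rewrite eqn_leq dF lt.
have dcap : \dim (H :&: H')%VS = n.-1.
  by have := dimv_sum_cap H H'; rewrite dsum dH dH'; lia.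
have SC : (S <= H :&: H')%VS by rewrite subv_cap SH SH'.
have := dimv_leqif_sup SC => /leqifP; rewrite dcap dS ltnn.
case: (boolP (H :&: H' <= S)%VS) => // CS _.
by apply: subv_trans CS; rewrite subv_cap XH XH'.
Qed.

Lemma dim_addline (U : {vspace V}) (w : V) :
  w \notin U -> \dim (U + <[w]>)%VS = (\dim U).+1.
Proof.
move=> wU.
have w0 : w != 0 by apply: contraNneq wU => ->; apply: mem0v.
have := dimv_sum_cap U <[w]>; rewrite dim_vline w0.
have := dimv_leqif_sup (capvSr U <[w]>) => /leqifP.
rewrite dim_vline w0.
case: (boolP (<[w]> <= U :&: <[w]>)%VS) => [h|_].
  by exfalso; move: wU; rewrite memvE; move: h; rewrite subv_cap => /andP[-> _].
move=> h; lia.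
Qed.

Lemma third_point (k : nat) (U U1 U2 W : {vspace V}) :
  \dim U = k -> \dim U1 = k.+1 -> \dim U2 = k.+1 ->
  (U <= U1)%VS -> (U <= U2)%VS -> (U1 <= W)%VS -> (U2 <= W)%VS -> U1 <> U2 ->
  exists u v (X3 : {vspace V}), u \in U1 /\ (U2 <= U + <[v]>)%VS /\
    u + v \in X3 /\ pencil k U W X3 /\ X3 <> U1 /\ X3 <> U2.
Proof.
move=> dU d1 d2 UU1 UU2 U1W U2W n12.
have nsub : forall A B : {vspace V}, \dim A = k.+1 -> \dim B = k.+1 -> A <> B ->
    ~~ (A <= B)%VS.
  move=> A B dA dB nAB; apply/negP => AB; apply: nAB; apply/eqP.
  by rewrite eqEdim AB dA dB leqnn.
have /subvPn [u uU1 uU2] := nsub _ _ d1 d2 n12.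
have /subvPn [v vU2 vU1] := nsub _ _ d2 d1 (fun e => n12 (esym e)).
have vU : v \notin U by apply: contra vU1; apply: (subvP UU1).
have uvU : u + v \notin U.
  apply: contra uU2 => h.
  have -> : u = (u + v) - v by rewrite addrK.
  by apply: memvB => //; apply: (subvP UU2).
have uvX : u + v \in (U + <[u + v]>)%VS by apply: (subvP (addvSr _ _)); apply: memv_line.
exists u, v, (U + <[u + v]>)%VS; split => //; split.
  have le : (U + <[v]> <= U2)%VS by rewrite subv_add UU2 -memvE.
  have : (U + <[v]>)%VS == U2 by rewrite eqEdim le d2 dim_addline // dU leqnn.
  by move/eqP => ->; apply: subvv.
split => //; split.
  split; first by rewrite dim_addline // dU.
  split; first by apply: addvSl.
  rewrite subv_add (subv_trans UU1 U1W) -memvE /=.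
  by apply: memvD; [apply: (subvP U1W) | apply: (subvP U2W)].
split => e; rewrite e in uvX.
  apply: (negP vU1).
  have -> : v = - u + (u + v) by rewrite addKr.
  by apply: memvD => //; rewrite memvN.
apply: (negP uU2).
have -> : u = (u + v) - v by rewrite addrK.
by apply: memvB.
Qed.

End Helpers.

Theorem theorem5p1 (F : fieldType) (n k : nat) (chi : partial_map F n) :
  (1 <= n)%N -> (k <= n.-1)%N ->
  linear_mapping k chi -> null_property chi ->
  gen_polarity k chi.
Proof.
move=> n1 kn [Hpm Hlin] Hnull.
move=> U1 U2 g1 g2 [U [W [[dU [dW UW]] [[d1 [UU1 U1W]] [d2 [UU2 U2W]]]]]] h.
rewrite /ext_image in h *.
case E1: (chi U1) => [H1|]; last by rewrite subvf.
have U1H1 := Hnull _ _ E1.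
case: (eqVneq U1 U2) => [<-|n12] //.
have n12' : U1 <> U2 by apply/eqP.
have [u [v [X3 [uU1 [U2v [uvX [pX3 [n31 n32]]]]]]]] :=
  @third_point F n k U U1 U2 W dU d1 d2 UU1 UU2 U1W U2W n12'.
have p1 : pencil k U W U1 by [].
have p2 : pencil k U W U2 by [].
case: (Hlin U W (conj dU (conj dW UW))) =>
  [[Ci _]|[[_ [Cii _]]|[_ [_ Ciii]]]]; last first.
- by rewrite Ciii in E1.
- move: Cii => [[H0 HH0] [X0 [pX0 [nX0 uX0]]]].
  have e1 : H1 = H0 by apply/HH0; exists U1.
  case E2: (chi U2) => [H2|].
    have e2 : H2 = H0 by apply/HH0; exists U2.
    by rewrite e1 -e2; apply: Hnull E2.
  have eX0 : U2 = X0 by apply: uX0.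
  case E3: (chi X3) => [H3|]; last by exfalso; apply: n32; rewrite eX0; apply: uX0.
  have e3 : H3 = H0 by apply/HH0; exists X3.
  have X3H1 : (X3 <= H1)%VS by rewrite e1 -e3; apply: Hnull E3.
  have uH1 : u \in H1 by apply: (subvP U1H1).
  have vH1 : v \in H1.
    have -> : v = - u + (u + v) by rewrite addKr.
    by apply: memvD; [rewrite memvN | apply: (subvP X3H1)].
  apply: subv_trans U2v _.
  by rewrite subv_add (subv_trans UU1 U1H1) -memvE.
- move: Ci => [[S [dS HS]] [Hdef Hinj]].
  case E2: (chi U2) => [H2|]; last by exfalso; apply: (Hdef U2).
  rewrite E2 in h.
  case E3: (chi X3) => [H3|]; last by exfalso; apply: (Hdef X3).
  have SH : forall X H, pencil k U W X -> chi X = Some H -> (S <= H)%VS.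
    by move=> X H pX EX; have [_ ] := (HS H).1 (ex_intro _ X (conj pX EX)).
  have dimH : forall X H, chi X = Some H -> \dim H = n.
    by move=> X H EX; have [_ ] := Hpm X H EX.
  have n1_2 : H1 <> H2.
    by move=> e; apply: n12'; apply: Hinj => //; rewrite E1 E2 e.
  have n2_3 : H2 <> H3.
    by move=> e; apply: n32; apply: Hinj => //; rewrite E2 E3 e.
  have U1S : (U1 <= S)%VS.
    exact: (@hyp_cap F n _ _ _ _ (dimH _ _ E1) (dimH _ _ E2) n1_2 dS
             (SH _ _ p1 E1) (SH _ _ p2 E2) U1H1 h).
  have SH3 := SH _ _ pX3 E3.
  have X3H3 : (X3 <= H3)%VS by apply: Hnull E3.
  have uH3 : u \in H3 by apply: (subvP SH3); apply: (subvP U1S).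
  have vH3 : v \in H3.
    have -> : v = - u + (u + v) by rewrite addKr.
    by apply: memvD; [rewrite memvN | apply: (subvP X3H3)].
  have U2H3 : (U2 <= H3)%VS.
    apply: subv_trans U2v _.
    by rewrite subv_add (subv_trans UU1 (subv_trans U1S SH3)) -memvE.
  have U2S : (U2 <= S)%VS.
    exact: (@hyp_cap F n _ _ _ _ (dimH _ _ E2) (dimH _ _ E3) n2_3 dS
             (SH _ _ p2 E2) SH3 (Hnull _ _ E2) U2H3).
  exact: (subv_trans U2S (SH _ _ p1 E1)).
Qed.
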